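(* Let $A\subseteq\mathbb{N}$ and $x\in\mathbb{R}$. There exists a density measure $\mu$ such that $\mu(A)=x$ if and only if $x\in[\underline{\underline{d}}(A),\overline{\overline{d}}(A)]$.
   Context: $\mathbb{N}=\{1,2,3,\dots\}$. For $A\subseteq\mathbb{N}$ let $A(n)=|A\cap[1,n]|$. Let $\mathcal{D}$ be the collection of all $A\subseteq\mathbb{N}$ for which the asymptotic density $d(A)=\lim_{n\to\infty}\frac{A(n)}{n}$ exists. A density measure is a function $\mu:\mathcal{P}(\mathbb{N})\to[0,1]$ with $\mu(\mathbb{N})=1$, $\mu(A\cup B)=\mu(A)+\mu(B)$ for all disjoint $A,B\subseteq\mathbb{N}$, and $\mu(A)=d(A)$ for all $A\in\mathcal{D}$. Define $\underline{\underline{d}}(A)=\sup\{d(B);\ B\subseteq A,\ B\in\mathcal{D}\}$ and $\overline{\overline{d}}(A)=\inf\{d(C);\ C\supseteq A,\ C\in\mathcal{D}\}$. *)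

(* Defs.v *)
From Stdlib Require Import Reals Lra Classical ClassicalEpsilon.
From Coquelicot Require Import Coquelicot.
Open Scope R_scope.

Definition PosNat : Type := {k : nat | (0 < k)%nat}.

Definition subsetN (B C : PosNat -> Prop) : Prop := forall k, B k -> C k.

Definition fullN : PosNat -> Prop := fun _ => True.

Definition unionN (B C : PosNat -> Prop) : PosNat -> Prop := fun k => B k \/ C k.

Definition disjointN (B C : PosNat -> Prop) : Prop := forall k, ~ (B k /\ C k).

Definition indic (P : Prop) : R :=
  if excluded_middle_informative P then 1 else 0.

Fixpoint countN (A : PosNat -> Prop) (n : nat) : R :=
  match n with
  | O => 0
  | S m => countN A m + indic (A (exist (fun k => (0 < k)%nat) (S m) (Nat.lt_0_succ m)))
  end.

Definition has_density (A : PosNat -> Prop) (l : R) : Prop :=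
  is_lim_seq (fun n => countN A n / INR n) (Finite l).

Definition in_D (A : PosNat -> Prop) : Prop := exists l, has_density A l.

Definition density_measure (mu : (PosNat -> Prop) -> R) : Prop :=
  (forall A, 0 <= mu A <= 1) /\
  mu fullN = 1 /\
  (forall A B, disjointN A B -> mu (unionN A B) = mu A + mu B) /\
  (forall A l, has_density A l -> mu A = l).

Definition lower_dd (A : PosNat -> Prop) : R :=
  real (Lub_Rbar (fun l => exists B, subsetN B A /\ has_density B l)).

Definition upper_dd (A : PosNat -> Prop) : R :=
  real (Glb_Rbar (fun l => exists C, subsetN A C /\ has_density C l)).

(* Main.v *)
Require Import Defs.
From Stdlib Require Import Reals.
From Coquelicot Require Import Coquelicot.
Open Scope R_scope.
From Stdlib Require Import Lra Lia Classical ClassicalEpsilon FunctionalExtensionality PropExtensionality.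
Require mathcomp.classical.classical_sets.
Lemma myZorn (T : Type) (P : (T -> Prop) -> Prop) :
  (forall F : (T -> Prop) -> Prop, (forall X, F X -> P X) ->
     (forall X Y, F X -> F Y -> (forall t, X t -> Y t) \/ (forall t, Y t -> X t)) ->
     P (fun t => exists2 X, F X & X t)) ->
  exists A, P A /\ forall B, (forall t, A t -> B t) -> ~ (forall t, B t -> A t) -> ~ P B.
Proof.
intros H.
destruct (@mathcomp.classical.classical_sets.Zorn_bigcup T P) as [A [PA HA]].
- intros F FP Ftot. 
  assert (E : mathcomp.classical.classical_sets.bigcup F (fun X => X) = (fun t => exists2 X, F X & X t)).
  { reflexivity. }
  rewrite E. apply H. exact FP. exact Ftot.
- exists A. split. exact PA. intros B h1 h2. apply HA. split. exact h1. exact h2.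
Qed.

Definition mkP (m : nat) : PosNat := exist (fun k => (0 < k)%nat) (S m) (Nat.lt_0_succ m).

Fixpoint psum (f : PosNat -> R) (n : nat) : R :=
  match n with O => 0 | S m => psum f m + f (mkP m) end.

Definition ind (B : PosNat -> Prop) : PosNat -> R := fun k => indic (B k).

Lemma countN_psum B n : countN B n = psum (ind B) n.
Proof. induction n; simpl; [reflexivity| rewrite IHn; reflexivity]. Qed.

Lemma indic_01 P : 0 <= indic P <= 1.
Proof. unfold indic; destruct (excluded_middle_informative P); lra. Qed.
Lemma indic_true (P : Prop) : P -> indic P = 1.
Proof. intro h; unfold indic; destruct (excluded_middle_informative P); tauto. Qed.
Lemma indic_false (P : Prop) : ~ P -> indic P = 0.
Proof. intro h; unfold indic; destruct (excluded_middle_informative P); tauto. Qed.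

Lemma psum_plus f g n : psum (fun k => f k + g k) n = psum f n + psum g n.
Proof. induction n; simpl; [ring| rewrite IHn; ring]. Qed.
Lemma psum_scal a f n : psum (fun k => a * f k) n = a * psum f n.
Proof. induction n; simpl; [ring| rewrite IHn; ring]. Qed.
Lemma psum_nonneg f : (forall k, 0 <= f k) -> forall n, 0 <= psum f n.
Proof. intros h n; induction n; simpl; [lra| specialize (h (mkP n)); lra]. Qed.
Lemma psum_const1 n : psum (fun _ => 1) n = INR n.
Proof. induction n; simpl psum; [reflexivity| rewrite IHn, S_INR; ring]. Qed.

Definition GV (f : PosNat -> R) (c : R) : Prop :=
  is_lim_seq (fun n => psum f n / INR n) c.

Lemma GV_plus f g a b : GV f a -> GV g b -> GV (fun k => f k + g k) (a + b).
Proof.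
  unfold GV; intros h1 h2.
  apply is_lim_seq_ext with (fun n => psum f n / INR n + psum g n / INR n).
  - intro n; rewrite psum_plus; unfold Rdiv; ring.
  - apply is_lim_seq_plus'; assumption.
Qed.

Lemma GV_scal f a t : GV f a -> GV (fun k => t * f k) (t * a).
Proof.
  unfold GV; intros h.
  apply is_lim_seq_ext with (fun n => t * (psum f n / INR n)).
  - intro n; rewrite psum_scal; unfold Rdiv; ring.
  - apply (is_lim_seq_scal_l _ t a h).
Qed.

Lemma GV_pos f a : (forall k, 0 <= f k) -> GV f a -> 0 <= a.
Proof.
  intros hf h.
  assert (H := is_lim_seq_le (fun _ => 0) (fun n => psum f n / INR n) 0 a).
  simpl in H. apply H; [|apply is_lim_seq_const| exact h].
  intro n. unfold Rdiv. apply Rmult_le_pos. apply psum_nonneg; exact hf.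
  destruct n. simpl INR. rewrite Rinv_0; lra. left; apply Rinv_0_lt_compat, lt_0_INR; lia.
Qed.

Lemma GV_unique f a b : GV f a -> GV f b -> a = b.
Proof.
  unfold GV; intros h1 h2. apply is_lim_seq_unique in h1. apply is_lim_seq_unique in h2.
  rewrite h1 in h2. injection h2; auto.
Qed.

Lemma GV_one : GV (fun _ => 1) 1.
Proof.
  unfold GV. apply is_lim_seq_ext_loc with (fun _ => 1).
  - exists 1%nat. intros n hn. rewrite psum_const1. field. apply not_0_INR; lia.
  - apply is_lim_seq_const.
Qed.

Lemma density_GV B l : has_density B l <-> GV (ind B) l.
Proof.
  unfold has_density, GV. split; apply is_lim_seq_ext; intro n; rewrite countN_psum; reflexivity.
Qed.

Lemma ind_nonneg B k : 0 <= ind B k.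
Proof. apply indic_01. Qed.

Lemma density_bounds B l : has_density B l -> 0 <= l <= 1.
Proof.
  intro h; apply density_GV in h. split.
  - exact (GV_pos _ _ (ind_nonneg B) h).
  - assert (h2 := GV_plus _ _ _ _ GV_one (GV_scal _ _ (-1) h)).
    apply GV_pos in h2; [lra|]. intro k. pose proof (indic_01 (B k)). unfold ind. lra.
Qed.

Lemma lub_props (E : R -> Prop) : (exists l, E l) -> (forall l, E l -> 0 <= l <= 1) ->
  (forall l, E l -> l <= real (Lub_Rbar E)) /\
  (forall b, (forall l, E l -> l <= b) -> real (Lub_Rbar E) <= b).
Proof.
  intros [l0 hl0] hb. destruct (Lub_Rbar_correct E) as [H1 H2].
  remember (Lub_Rbar E) as L.
  assert (Hup : Rbar_le L 1). { apply H2. intros y hy. simpl. apply hb, hy. }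
  assert (Hlo : Rbar_le l0 L) by (apply H1, hl0).
  destruct L as [r| |]; simpl in *; try contradiction.
  split.
  - intros l hl. apply (H1 l hl).
  - intros b hbd. apply (H2 (Finite b)). intros y hy; apply hbd, hy.
Qed.

Lemma glb_props (E : R -> Prop) : (exists l, E l) -> (forall l, E l -> 0 <= l <= 1) ->
  (forall l, E l -> real (Glb_Rbar E) <= l) /\
  (forall b, (forall l, E l -> b <= l) -> b <= real (Glb_Rbar E)).
Proof.
  intros [l0 hl0] hb. destruct (Glb_Rbar_correct E) as [H1 H2].
  remember (Glb_Rbar E) as L.
  assert (Hup : Rbar_le 0 L). { apply H2. intros y hy. simpl. apply hb, hy. }
  assert (Hlo : Rbar_le L l0) by (apply H1, hl0).
  destruct L as [r| |]; simpl in *; try contradiction.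
  split.
  - intros l hl. apply (H1 l hl).
  - intros b hbd. apply (H2 (Finite b)). intros y hy; apply hbd, hy.
Qed.

Lemma has_density_empty : has_density (fun _ => False) 0.
Proof.
  apply density_GV. unfold GV. apply is_lim_seq_ext with (fun _ => 0).
  - intro n. replace (psum (ind (fun _ => False)) n) with 0. unfold Rdiv; ring.
    induction n; simpl; [reflexivity|]. rewrite <- IHn. unfold ind. rewrite indic_false; auto; lra.
  - apply is_lim_seq_const.
Qed.

Lemma has_density_full : has_density fullN 1.
Proof.
  apply density_GV. replace (ind fullN) with (fun _ : PosNat => 1). apply GV_one.
  apply functional_extensionality; intro k; unfold ind; rewrite indic_true; [reflexivity| exact I].
Qed.

Lemma lower_props A :
  (forall l, (exists B, subsetN B A /\ has_density B l) -> l <= lower_dd A) /\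
  (forall b, (forall l, (exists B, subsetN B A /\ has_density B l) -> l <= b) -> lower_dd A <= b).
Proof.
  unfold lower_dd. apply lub_props.
  - exists 0, (fun _ => False). split; [intros k []| apply has_density_empty].
  - intros l [B [_ h]]. apply density_bounds in h; exact h.
Qed.

Lemma upper_props A :
  (forall l, (exists C, subsetN A C /\ has_density C l) -> upper_dd A <= l) /\
  (forall b, (forall l, (exists C, subsetN A C /\ has_density C l) -> b <= l) -> b <= upper_dd A).
Proof.
  unfold upper_dd. apply glb_props.
  - exists 1, fullN. split; [intros k _; exact I| apply has_density_full].
  - intros l [B [_ h]]. apply density_bounds in h; exact h.
Qed.

Definition Gr := ((PosNat -> R) * R)%type.

Definition good (G : Gr -> Prop) : Prop :=
  (forall f r s, G (f,r) -> G (f,s) -> r = s) /\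
  G (fun _ => 0, 0) /\
  (forall f g r s, G (f,r) -> G (g,s) -> G (fun k => f k + g k, r + s)) /\
  (forall f r a, G (f,r) -> G (fun k => a * f k, a * r)) /\
  (forall f r, G (f,r) -> (forall k, 0 <= f k) -> 0 <= r).

Definition ext (G : Gr -> Prop) (f : PosNat -> R) (v : R) (p : Gr) : Prop :=
  exists g r t, G (g,r) /\ fst p = (fun k => g k + t * f k) /\ snd p = r + t * v.

Lemma good_sub G f g r s : good G -> G (f,r) -> G (g,s) -> G (fun k => g k - f k, s - r).
Proof.
  intros (h1&h2&h3&h4&h5) hf hg.
  assert (H := h3 _ _ _ _ hg (h4 _ _ (-1) hf)).
  replace (fun k => g k - f k) with (fun k => g k + -1 * f k).
  replace (s - r) with (s + -1 * r) by ring. exact H.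
  apply functional_extensionality; intro; ring.
Qed.

Lemma ext_sub G f v g r : G (g,r) -> ext G f v (g,r).
Proof.
  intro h. exists g, r, 0. split; [exact h|split; simpl].
  apply functional_extensionality; intro; ring. ring.
Qed.

Lemma ext_pt G f v : good G -> ext G f v (f,v).
Proof.
  intros (h1&h2&_). exists (fun _ => 0), 0, 1. split; [exact h2|split; simpl].
  apply functional_extensionality; intro; ring. ring.
Qed.

Lemma ext_good G f v : good G ->
  (forall g r, G (g,r) -> (forall k, g k <= f k) -> r <= v) ->
  (forall g r, G (g,r) -> (forall k, f k <= g k) -> v <= r) ->
  good (ext G f v).
Proof.
  intros HG hlo hhi. pose proof HG as (h1&h2&h3&h4&h5).
  split; [|split; [|split; [|split]]].
  - intros h s1 s2 [g1 [r1 [t1 [G1 [E1 F1]]]]] [g2 [r2 [t2 [G2 [E2 F2]]]]].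
    simpl in *. subst s1 s2.
    assert (Ek : forall k, g1 k + t1 * f k = g2 k + t2 * f k).
    { intro k. pose proof (f_equal (fun F => F k) E1) as X1. pose proof (f_equal (fun F => F k) E2) as X2.
      simpl in X1, X2. lra. }
    destruct (Req_dec t1 t2) as [e|ne].
    + subst t2. assert (g1 = g2). { apply functional_extensionality; intro k; specialize (Ek k); lra. }
      subst g2. rewrite (h1 _ _ _ G1 G2). reflexivity.
    + pose proof (good_sub _ _ _ _ _ HG G2 G1) as D.
      pose proof (h4 _ _ (/ (t2 - t1)) D) as D2.
      assert (Ef : (fun k => / (t2 - t1) * (g1 k - g2 k)) = f).
      { apply functional_extensionality; intro k. specialize (Ek k).
        assert (t2 - t1 <> 0) by lra. field_simplify; [|assumption]. 
        apply Rmult_eq_reg_l with (t2 - t1); [|assumption]. field_simplify; [|assumption]. lra. }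
      cbv beta in D2. rewrite Ef in D2.
      assert (u1 := hlo _ _ D2 (fun k => Rle_refl _)).
      assert (u2 := hhi _ _ D2 (fun k => Rle_refl _)).
      assert (ev : v = / (t2 - t1) * (r1 - r2)) by lra.
      assert (t2 - t1 <> 0) by lra.
      rewrite ev. field. assumption.
  - apply ext_sub with (g := fun _ => 0) (r := 0). exact h2.
  - intros F1 F2 s1 s2 [g1 [r1 [t1 [G1 [E1 S1]]]]] [g2 [r2 [t2 [G2 [E2 S2]]]]].
    simpl in *. subst. exists (fun k => g1 k + g2 k), (r1 + r2), (t1 + t2).
    split; [apply h3; assumption| split; simpl].
    apply functional_extensionality; intro; ring. ring.
  - intros F1 s1 a [g1 [r1 [t1 [G1 [E1 S1]]]]]. simpl in *; subst.
    exists (fun k => a * g1 k), (a * r1), (a * t1).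
    split; [apply h4; assumption| split; simpl].
    apply functional_extensionality; intro; ring. ring.
  - intros F1 s1 [g1 [r1 [t1 [G1 [E1 S1]]]]] hpos. simpl in *; subst.
    destruct (Rtotal_order t1 0) as [tn|[t0|tp]].
    + assert (hi : / - t1 > 0) by (apply Rinv_0_lt_compat; lra).
      pose proof (h4 _ _ (/ - t1) G1) as G2.
      assert (v <= / - t1 * r1).
      { apply (hhi _ _ G2). intro k. specialize (hpos k). simpl in hpos.
        assert (0 <= / - t1 * (g1 k + t1 * f k)) by (apply Rmult_le_pos; lra).
        replace (/ - t1 * (g1 k + t1 * f k)) with (/ - t1 * g1 k - f k) in H by (field; lra). lra. }
      replace (r1 + t1 * v) with ((- t1) * (/ - t1 * r1 - v)) by (field; lra).
      apply Rmult_le_pos; lra.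
    + subst t1. replace (r1 + 0 * v) with r1 by ring. apply (h5 _ _ G1).
      intro k. specialize (hpos k). simpl in hpos. lra.
    + assert (hi : / t1 > 0) by (apply Rinv_0_lt_compat; lra).
      pose proof (h4 _ _ (- / t1) G1) as G2.
      assert (- / t1 * r1 <= v).
      { apply (hlo _ _ G2). intro k. specialize (hpos k). simpl in hpos.
        assert (0 <= / t1 * (g1 k + t1 * f k)) by (apply Rmult_le_pos; lra).
        replace (/ t1 * (g1 k + t1 * f k)) with (f k - - / t1 * g1 k) in H by (field; lra). lra. }
      replace (r1 + t1 * v) with (t1 * (v - - / t1 * r1)) by (field; lra).
      apply Rmult_le_pos; lra.
Qed.

Fixpoint cnt (A : PosNat -> Prop) (c : R) (n : nat) : R :=
  match n with
  | O => 0
  | S m => cnt A c m + indic (A (mkP m) \/ cnt A c m < c * INR (S m))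
  end.

Definition Cset (A : PosNat -> Prop) (c : R) (k : PosNat) : Prop :=
  A k \/ cnt A c (pred (proj1_sig k)) < c * INR (proj1_sig k).

Lemma countN_Cset A c n : countN (Cset A c) n = cnt A c n.
Proof. induction n; simpl; [reflexivity| rewrite IHn; reflexivity]. Qed.

Lemma cnt_S A c n : cnt A c (S n) = cnt A c n + indic (A (mkP n) \/ cnt A c n < c * INR (S n)).
Proof. reflexivity. Qed.

Lemma cnt_lower A c n : c <= 1 -> c * INR n - 1 <= cnt A c n.
Proof.
  intro hc. induction n.
  - simpl. lra.
  - rewrite cnt_S. unfold indic.
    destruct (excluded_middle_informative (A (mkP n) \/ cnt A c n < c * INR (S n))) as [h|h].
    + rewrite S_INR, Rmult_plus_distr_l, Rmult_1_r in *. lra.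
    + assert (~ cnt A c n < c * INR (S n)) by tauto.
      rewrite S_INR, Rmult_plus_distr_l, Rmult_1_r in *. lra.
Qed.

Definition ee (g : PosNat -> R) (c : R) (n : nat) : R := psum g n - c * INR n.

Fixpoint Mx (g : PosNat -> R) (c : R) (n : nat) : R :=
  match n with
  | O => Rabs (ee g c 0)
  | S m => Rmax (Mx g c m) (Rabs (ee g c (S m)))
  end.

Lemma Mx_S g c m : Mx g c (S m) = Rmax (Mx g c m) (Rabs (ee g c (S m))).
Proof. reflexivity. Qed.

Lemma Mx_ge g c m n : (m <= n)%nat -> Rabs (ee g c m) <= Mx g c n.
Proof.
  intro h. induction h.
  - destruct m; simpl; [lra| apply Rmax_r].
  - simpl. eapply Rle_trans; [exact IHh| apply Rmax_l].
Qed.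

Lemma Mx_mono g c m n : (m <= n)%nat -> Mx g c m <= Mx g c n.
Proof.
  intro h. induction h; [lra|]. simpl. eapply Rle_trans; [exact IHh| apply Rmax_l].
Qed.

Lemma Mx_nonneg g c n : 0 <= Mx g c n.
Proof. eapply Rle_trans; [apply Rabs_pos| apply (Mx_ge g c 0 n); lia]. Qed.

Lemma cnt_inv A g c n : (forall k, ind A k <= g k) ->
  exists m, (m <= n)%nat /\ cnt A c n <= c * INR m + 1 + psum g n - psum g m.
Proof.
  intro hA. induction n.
  - exists 0%nat. split; [lia| simpl; lra].
  - destruct IHn as [m [hm hc]].
    destruct (Rlt_dec (cnt A c n) (c * INR (S n))) as [h|h].
    + exists (S n). split; [lia|]. rewrite cnt_S. pose proof (indic_01 (A (mkP n) \/ cnt A c n < c * INR (S n))).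
      lra.
    + exists m. split; [lia|]. rewrite cnt_S. simpl psum.
      assert (indic (A (mkP n) \/ cnt A c n < c * INR (S n)) <= g (mkP n)).
      { unfold indic. destruct (excluded_middle_informative (A (mkP n) \/ cnt A c n < c * INR (S n))) as [h2|h2].
        - destruct h2 as [h2|h2]; [|contradiction].
          specialize (hA (mkP n)). unfold ind in hA. rewrite indic_true in hA; auto.
        - specialize (hA (mkP n)). pose proof (ind_nonneg A (mkP n)). lra. }
      lra.
Qed.

Lemma cnt_upper A g c n : (forall k, ind A k <= g k) ->
  cnt A c n <= c * INR n + 1 + ee g c n + Mx g c n.
Proof.
  intro hA. destruct (cnt_inv A g c n hA) as [m [hm h]].
  pose proof (Mx_ge g c m n hm). pose proof (Rabs_pos (ee g c m)).
  pose proof (Rle_abs (- ee g c m)). rewrite Rabs_Ropp in H1.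
  unfold ee in *. lra.
Qed.

Lemma e_lim g c : GV g c -> is_lim_seq (fun n => ee g c n / INR n) 0.
Proof.
  intro h. apply is_lim_seq_ext_loc with (fun n => psum g n / INR n - c).
  - exists 1%nat. intros n hn. unfold ee. field. apply not_0_INR; lia.
  - replace (Finite 0) with (Finite (c - c)) by (f_equal; ring).
    apply is_lim_seq_minus'; [exact h| apply is_lim_seq_const].
Qed.

Lemma Mx_lim g c : GV g c -> is_lim_seq (fun n => Mx g c n / INR n) 0.
Proof.
  intro h. pose proof (e_lim g c h) as he. apply is_lim_seq_spec in he. apply is_lim_seq_spec.
  intro eps. destruct eps as [eps heps]. simpl.
  destruct (he (mkposreal (eps/2) ltac:(lra))) as [N1 hN1]. simpl in hN1.
  set (N1' := S N1).
  assert (HB : forall j, Mx g c (N1' + j) <= Rmax (Mx g c N1') (eps / 2 * INR (N1' + j))).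
  { induction j.
    - rewrite Nat.add_0_r. apply Rmax_l.
    - replace (N1' + S j)%nat with (S (N1' + j)) by lia. rewrite Mx_S.
      apply Rmax_lub.
      + eapply Rle_trans; [exact IHj|]. apply Rle_max_compat_l.
        apply Rmult_le_compat_l; [lra| apply le_INR; lia].
      + eapply Rle_trans; [|apply Rmax_r].
        assert (hn : (N1 <= S (N1' + j))%nat) by (unfold N1'; lia).
        specialize (hN1 _ hn).
        assert (hpos : 0 < INR (S (N1' + j))) by (apply lt_0_INR; lia).
        rewrite Rminus_0_r in hN1. unfold Rdiv in hN1. rewrite Rabs_mult, (Rabs_right (/ _)) in hN1
          by (left; apply Rinv_0_lt_compat; exact hpos).
        apply Rmult_lt_compat_r with (r := INR (S (N1' + j))) in hN1; [|exact hpos].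
        rewrite Rmult_assoc, Rinv_l in hN1 by lra. lra. }
  destruct (archimed (Mx g c N1' / (eps / 2))) as [ha _].
  set (N2 := Z.to_nat (up (Mx g c N1' / (eps / 2)))).
  exists (N1' + N2)%nat. intros n hn.
  replace n with (N1' + (n - N1'))%nat in * by lia.
  specialize (HB (n - N1')%nat).
  assert (hpos : 0 < INR (N1' + (n - N1'))) by (apply lt_0_INR; unfold N1'; lia).
  assert (hN2 : Mx g c N1' <= eps / 2 * INR (N1' + (n - N1'))).
  { assert (IZR (up (Mx g c N1' / (eps / 2))) <= INR N2).
    { unfold N2. rewrite INR_IZR_INZ. apply IZR_le.
      lia. }
    assert (INR N2 <= INR (N1' + (n - N1'))) by (apply le_INR; lia).
    assert (Mx g c N1' / (eps / 2) < INR (N1' + (n - N1'))) by lra.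
    apply Rmult_lt_compat_l with (r := eps / 2) in H1; [|lra].
    replace (eps / 2 * (Mx g c N1' / (eps / 2))) with (Mx g c N1') in H1 by (field; lra). lra. }
  assert (hM : Mx g c (N1' + (n - N1')) <= eps / 2 * INR (N1' + (n - N1'))).
  { eapply Rle_trans; [exact HB|]. apply Rmax_lub; lra. }
  rewrite Rminus_0_r. rewrite Rabs_right.
  - apply Rmult_lt_reg_r with (INR (N1' + (n - N1'))); [exact hpos|].
    unfold Rdiv. rewrite Rmult_assoc, Rinv_l by lra. nra.
  - apply Rle_ge. unfold Rdiv. apply Rmult_le_pos; [apply Mx_nonneg| left; apply Rinv_0_lt_compat; exact hpos].
Qed.

Lemma inv_lim : is_lim_seq (fun n => / INR n) 0.
Proof.
  assert (H := is_lim_seq_inv INR p_infty is_lim_seq_INR ltac:(discriminate)). exact H.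
Qed.

Lemma key A g c : GV g c -> (forall k, ind A k <= g k) -> c <= 1 ->
  exists C, subsetN A C /\ has_density C c.
Proof.
  intros hg hA hc. exists (Cset A c). split.
  - intros k hk. left; exact hk.
  - unfold has_density. apply is_lim_seq_ext with (fun n => cnt A c n / INR n).
    { intro; rewrite countN_Cset; reflexivity. }
    apply is_lim_seq_le_le_loc with (u := fun n => c - / INR n)
      (w := fun n => c + / INR n + ee g c n / INR n + Mx g c n / INR n).
    + exists 1%nat; intros n hn.
      assert (hpos : 0 < INR n) by (apply lt_0_INR; lia).
      pose proof (cnt_lower A c n hc). pose proof (cnt_upper A g c n hA).
      split.
      * apply Rmult_le_reg_r with (INR n); [exact hpos|].
        unfold Rdiv. rewrite Rmult_assoc, Rinv_l by lra.
        rewrite Rmult_minus_distr_r, Rinv_l by lra. lra.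
      * apply Rmult_le_reg_r with (INR n); [exact hpos|].
        unfold Rdiv. rewrite Rmult_assoc, Rinv_l by lra.
        rewrite !Rmult_plus_distr_r, !Rmult_assoc, Rinv_l by lra. lra.
    + replace (Finite c) with (Finite (c - 0)) by (f_equal; ring).
      apply is_lim_seq_minus'; [apply is_lim_seq_const| apply inv_lim].
    + replace (Finite c) with (Finite (c + 0 + 0 + 0)) by (f_equal; ring).
      apply is_lim_seq_plus'; [apply is_lim_seq_plus'; [apply is_lim_seq_plus'|]|].
      * apply is_lim_seq_const.
      * apply inv_lim.
      * apply e_lim, hg.
      * apply Mx_lim, hg.
Qed.

Lemma set_ext (B C : PosNat -> Prop) : (forall k, B k <-> C k) -> B = C.
Proof. intro h. apply functional_extensionality; intro k; apply propositional_extensionality, h. Qed.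

Lemma forward A x mu : density_measure mu -> mu A = x -> lower_dd A <= x <= upper_dd A.
Proof.
  intros (h01 & hfull & hadd & hd) hA. split.
  - apply (proj2 (lower_props A)). intros l [B [hBA hB]].
    rewrite <- (hd _ _ hB), <- hA.
    assert (E : A = unionN B (fun k => A k /\ ~ B k)).
    { apply set_ext; intro k; unfold unionN; split.
      - intro a. destruct (classic (B k)); tauto.
      - intros [b|[a _]]; [apply hBA, b| exact a]. }
    rewrite E, hadd. pose proof (h01 (fun k => A k /\ ~ B k)). lra.
    intros k [b [_ nb]]; contradiction.
  - apply (proj2 (upper_props A)). intros l [C [hAC hC]].
    rewrite <- (hd _ _ hC), <- hA.
    assert (E : C = unionN A (fun k => C k /\ ~ A k)).
    { apply set_ext; intro k; unfold unionN; split.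
      - intro a. destruct (classic (A k)); tauto.
      - intros [b|[a _]]; [apply hAC, b| exact a]. }
    rewrite E, hadd. pose proof (h01 (fun k => C k /\ ~ A k)). lra.
    intros k [b [_ nb]]; contradiction.
Qed.

Definition GVg (p : Gr) : Prop := GV (fst p) (snd p).

Lemma GVg_good : good GVg.
Proof.
  unfold GVg; split; [|split; [|split; [|split]]]; simpl.
  - intros f r s; apply GV_unique.
  - pose proof (GV_scal _ _ 0 GV_one) as H. rewrite Rmult_0_l in H.
    replace (fun _ : PosNat => 0) with (fun _ : PosNat => 0 * 1). exact H.
    apply functional_extensionality; intro; ring.
  - intros; apply GV_plus; assumption.
  - intros; apply GV_scal; assumption.
  - intros f r h hp. exact (GV_pos _ _ hp h).
Qed.

Lemma ind_compl B k : ind (fun k => ~ B k) k = 1 - ind B k.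
Proof.
  unfold ind. destruct (classic (B k)) as [c|c].
  - rewrite (indic_true (B k)), (indic_false (~ B k)) by tauto; ring.
  - rewrite (indic_false (B k)), (indic_true (~ B k)) by tauto; ring.
Qed.

Lemma complement_density C l : has_density C l -> has_density (fun k => ~ C k) (1 - l).
Proof.
  intro h. apply density_GV in h. apply density_GV.
  replace (ind (fun k => ~ C k)) with (fun k => 1 + -1 * ind C k).
  replace (1 - l) with (1 + -1 * l) by ring.
  apply GV_plus; [apply GV_one| apply GV_scal, h].
  apply functional_extensionality; intro k. rewrite ind_compl. ring.
Qed.

Lemma hi_cond A x g r : x <= upper_dd A -> GV g r -> (forall k, ind A k <= g k) -> x <= r.
Proof.
  intros hx hg hA. destruct (Rle_lt_dec r 1) as [h|h].
  - destruct (key A g r hg hA h) as [C [hC hd]].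
    assert (upper_dd A <= r) by (apply (proj1 (upper_props A)); exists C; auto). lra.
  - assert (upper_dd A <= 1).
    { apply (proj1 (upper_props A)). exists fullN. split; [intros k _; exact I| apply has_density_full]. }
    lra.
Qed.

Lemma lo_cond A x g r : lower_dd A <= x -> GV g r -> (forall k, g k <= ind A k) -> r <= x.
Proof.
  intros hx hg hA. destruct (Rle_lt_dec r 0) as [h|h].
  - assert (0 <= lower_dd A).
    { apply (proj1 (lower_props A)). exists (fun _ => False). split; [intros k []| apply has_density_empty]. }
    lra.
  - assert (hg' : GV (fun k => 1 + -1 * g k) (1 + -1 * r)) by (apply GV_plus; [apply GV_one| apply GV_scal, hg]).
    assert (hA' : forall k, ind (fun k => ~ A k) k <= 1 + -1 * g k).
    { intro k. rewrite ind_compl. specialize (hA k). lra. }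
    destruct (key _ _ _ hg' hA' ltac:(lra)) as [C [hC hd]].
    apply complement_density in hd.
    replace (1 - (1 + -1 * r)) with r in hd by ring.
    assert (r <= lower_dd A).
    { apply (proj1 (lower_props A)). exists (fun k => ~ C k). split; [|exact hd].
      intros k nc. destruct (classic (A k)) as [a|a]; [exact a|]. exfalso; apply nc, hC, a. }
    lra.
Qed.

Definition Pz (G0 : Gr -> Prop) (G : Gr -> Prop) : Prop :=
  (forall p, ~ G p) \/ (good G /\ forall p, G0 p -> G p).

Lemma chain_ok G0 (F : (Gr -> Prop) -> Prop) :
  (forall X, F X -> Pz G0 X) ->
  (forall X Y, F X -> F Y -> (forall t, X t -> Y t) \/ (forall t, Y t -> X t)) ->
  Pz G0 (fun t => exists2 X, F X & X t).
Proof.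
  intros FP Ftot.
  destruct (classic (exists X p, F X /\ X p)) as [[X0 [p0 [FX0 Xp0]]] | none].
  - assert (gd : forall X p, F X -> X p -> good X /\ forall q, G0 q -> X q).
    { intros X p FX Xp. destruct (FP X FX) as [e|g]; [exfalso; exact (e p Xp)| exact g]. }
    assert (two : forall p q, (exists2 X, F X & X p) -> (exists2 X, F X & X q) ->
                  exists Z, F Z /\ Z p /\ Z q /\ good Z).
    { intros p q [X FX Xp] [Y FY Yq]. destruct (Ftot X Y FX FY) as [s|s].
      - exists Y. split; [exact FY| split; [auto| split; [auto| exact (proj1 (gd Y q FY Yq))]]].
      - exists X. split; [exact FX| split; [auto| split; [auto| exact (proj1 (gd X p FX Xp))]]]. }
    right. destruct (gd X0 p0 FX0 Xp0) as [gX0 sX0]. split.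
    + split; [|split; [|split; [|split]]].
      * intros f r s h1 h2. destruct (two _ _ h1 h2) as [Z [_ [z1 [z2 (g1&_)]]]]. exact (g1 _ _ _ z1 z2).
      * exists X0; [exact FX0| exact (proj1 (proj2 gX0))].
      * intros f g r s h1 h2. destruct (two _ _ h1 h2) as [Z [FZ [z1 [z2 (_&_&g3&_)]]]].
        exists Z; [exact FZ| exact (g3 _ _ _ _ z1 z2)].
      * intros f r a [X FX Xp]. exists X; [exact FX|]. exact (proj1 (proj2 (proj2 (proj2 (proj1 (gd X _ FX Xp))))) _ _ a Xp).
      * intros f r [X FX Xp]. exact (proj2 (proj2 (proj2 (proj2 (proj1 (gd X _ FX Xp))))) f r Xp).
    + intros p hp. exists X0; [exact FX0| exact (sX0 p hp)].
  - left. intros p [X FX Xp]. apply none. exists X, p. auto.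
Qed.

Theorem corollary3p3 (A : PosNat -> Prop) (x : R) :
  (exists mu : (PosNat -> Prop) -> R, density_measure mu /\ mu A = x) <->
  lower_dd A <= x <= upper_dd A.
Proof.
  split.
  - intros [mu [h1 h2]]. exact (forward A x mu h1 h2).
  - intros [hlx hxu].
    pose (G0 := ext GVg (ind A) x).
    assert (gG0 : good G0).
    { apply ext_good. apply GVg_good.
      - intros g r h hle. exact (lo_cond A x g r hlx h hle).
      - intros g r h hle. exact (hi_cond A x g r hxu h hle). }
    destruct (myZorn Gr (Pz G0) (chain_ok G0)) as [M [PM maxM]].
    assert (HM : good M /\ forall p, G0 p -> M p).
    { destruct PM as [e|g]; [|exact g]. exfalso.
      apply (maxM G0).
      - intros t Mt; exfalso; exact (e t Mt).
      - intro H. apply (e (ind A, x)), H, ext_pt, GVg_good.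
      - right. split; [exact gG0| auto]. }
    destruct HM as [gM sM]. clear PM.
    assert (M1 : M (fun _ => 1, 1)).
    { apply sM. apply ext_sub. exact GV_one. }
    pose proof gM as (m1 & m2 & m3 & m4 & m5).
    assert (tot : forall f, (forall k, 0 <= f k <= 1) -> exists r, M (f, r)).
    { intros f hf. apply NNPP. intro nf.
      pose (E := fun r => exists g, M (g, r) /\ forall k, g k <= f k).
      assert (bE : bound E).
      { exists 1. intros r [g [Mg hg]]. pose proof (good_sub _ _ _ _ _ gM Mg M1) as D.
        apply m5 in D. lra. intro k. specialize (hg k). specialize (hf k). lra. }
      assert (nE : exists r, E r).
      { exists 0, (fun _ => 0). split; [exact m2| intro k; apply hf]. }
      destruct (completeness E bE nE) as [v [vub vlub]].
      apply (maxM (ext M f v)).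
      - intros t Mt. destruct t. apply ext_sub, Mt.
      - intro H. apply nf. exists v. apply H, ext_pt, gM.
      - right. split.
        + apply ext_good; [exact gM| |].
          * intros g r Mg hg. apply vub. exists g; auto.
          * intros g' r' Mg' hg'. apply vlub. intros r [g [Mg hg]].
            pose proof (good_sub _ _ _ _ _ gM Mg Mg') as D. apply m5 in D. lra.
            intro k. specialize (hg k). specialize (hg' k). lra.
        + intros p hp. destruct p. apply ext_sub, sM, hp. }
    assert (ind01 : forall B k, 0 <= ind B k <= 1) by (intros; apply indic_01).
    pose (mu := fun B => proj1_sig (constructive_indefinite_description _ (tot (ind B) (ind01 B)))).
    assert (muS : forall B, M (ind B, mu B)).
    { intro B. unfold mu. destruct (constructive_indefinite_description _ _) as [r hr]. exact hr. }
    exists mu. split; [split; [|split; [|split]]|].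
    + intro B. split.
      * apply (m5 _ _ (muS B)). apply ind_nonneg.
      * pose proof (good_sub _ _ _ _ _ gM (muS B) M1) as D. apply m5 in D. lra.
        intro k. pose proof (ind01 B k). lra.
    + assert (E : ind fullN = fun _ => 1).
      { apply functional_extensionality; intro k; unfold ind; rewrite indic_true; [reflexivity| exact I]. }
      pose proof (muS fullN) as h. rewrite E in h. exact (m1 _ _ _ h M1).
    + intros B C hBC. pose proof (m3 _ _ _ _ (muS B) (muS C)) as h.
      assert (E : (fun k => ind B k + ind C k) = ind (unionN B C)).
      { apply functional_extensionality; intro k; unfold ind, unionN.
        destruct (classic (B k)) as [b|b]; destruct (classic (C k)) as [c|c].
        - exfalso; exact (hBC k (conj b c)).
        - rewrite (indic_true (B k)), (indic_true (B k \/ C k)), (indic_false (C k)) by tauto. ring.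
        - rewrite (indic_true (C k)), (indic_true (B k \/ C k)), (indic_false (B k)) by tauto. ring.
        - rewrite !indic_false by tauto. ring. }
      rewrite E in h. exact (m1 _ _ _ (muS _) h).
    + intros B l hB. apply density_GV in hB.
      assert (h : M (ind B, l)) by (apply sM, ext_sub, hB).
      exact (m1 _ _ _ (muS B) h).
    + assert (h : M (ind A, x)) by (apply sM, ext_pt, GVg_good).
      exact (m1 _ _ _ (muS A) h).
Qed.
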